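(* Let $(R(m,d))_{m,d\in\mathbb{N}}$ be a family of graphs as described in the context. Let $d\in\mathbb{N}$ and $\varepsilon>0$. Then for all sufficiently large $m$ and every $\alpha\in[0,1]$, every subgraph $G$ of $R(m,d)$ with at least $(\alpha+2\varepsilon)\cdot e(R(m,d))$ edges satisfies \[ \frac{1}{d}\sum_{\ell=1}^d \frac{e_\ell(G)}{2^{d-1}m^2}\ge\alpha+\varepsilon. \]
   Context: For distinct $x,y\in\{0,1\}^d$, $\delta(x,y)=\min\{i: x_i\ne y_i\}$. For $x\in\{0,1\}^d$ the block $B_x$ is $\{x\}\times[m]$. An edge of a graph on $\{0,1\}^d\times[m]$ joining $B_x$ to $B_y$ with $\delta(x,y)=\ell$ is a level-$\ell$ edge; $e_\ell(G)$ is the number of level-$\ell$ edges of $G$. The family $R(m,d)$ (a graph on $\{0,1\}^d\times[m]$) satisfies: for every $d\in\mathbb{N}$ and $\varepsilon>0$, for all sufficiently large $m$, (i) for every $\ell\in[d]$, $e_\ell(R(m,d))=(1\pm\varepsilon)2^{d-1}m^2$ and $e(R(m,d))=(1\pm\varepsilon)d2^{d-1}m^2$; (ii) for all distinct $x,y$ and $P\subseteq B_x$, $Q\subseteq B_y$ with $|P|,|Q|\ge m^{2/3}$, the number of edges between $P$ and $Q$ is at most $(1+\varepsilon)2^{-d+\delta(x,y)}|P||Q|$. Here $a=(1\pm\varepsilon)b$ means $(1-\varepsilon)b\le a\le(1+\varepsilon)b$. *)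

(* Defs.v *)
From HB Require Import structures.
From mathcomp Require Import all_boot all_order all_algebra.
From mathcomp Require Import reals exp.
Set Implicit Arguments. Unset Strict Implicit. Unset Printing Implicit Defensive.
Import Order.TTheory GRing.Theory Num.Theory.
Local Open Scope ring_scope.

Definition cube (d : nat) := {ffun 'I_d -> bool}.
Definition vtx (d m : nat) := (cube d * 'I_m)%type.

(* a (simple) graph on vertex type V is given by its edge set; every edge is a
   2-element set of vertices *)
Definition simple_graph (V : finType) (E : {set {set V}}) : bool :=
  [forall e in E, #|e| == 2]%N.

(* delta(x,y) = min{ i : x_i <> y_i }, with coordinates numbered 1..d *)
Definition delta (d : nat) (x y : cube d) : nat :=
  (find (fun i : 'I_d => x i != y i) (enum 'I_d)).+1.

Definition block (d m : nat) (x : cube d) : {set vtx d m} :=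
  [set v | v.1 == x].

Definition is_level (d m : nat) (l : nat) (e : {set vtx d m}) : bool :=
  [exists u, exists v, [&& e == [set u; v], u.1 != v.1 & delta u.1 v.1 == l]].

Definition nedges (V : finType) (E : {set {set V}}) : nat := #|E|.

Definition e_level (d m l : nat) (E : {set {set vtx d m}}) : nat :=
  #|[set e in E | is_level l e]|.

Definition e_between (V : finType) (E : {set {set V}}) (P Q : {set V}) : nat :=
  #|[set e in E | [exists u in P, exists v in Q, e == [set u; v]]]|.

Definition approx (R : realFieldType) (eps a b : R) : Prop :=
  (1 - eps) * b <= a /\ a <= (1 + eps) * b.

Definition random_like_family (R : realType)
    (Rg : forall m d : nat, {set {set vtx d m}}) : Prop :=
  (forall m d, simple_graph (Rg m d)) /\
  forall (d : nat) (eps : R), 0 < eps ->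
  exists M : nat, forall m : nat, (M <= m)%N ->
    ((forall l : nat, (1 <= l <= d)%N ->
        approx eps (e_level l (Rg m d))%:R (2 ^+ d.-1 * (m%:R) ^+ 2)) /\
     approx eps (nedges (Rg m d))%:R (d%:R * 2 ^+ d.-1 * (m%:R) ^+ 2)) /\
    (forall (x y : cube d) (P Q : {set vtx d m}),
        x != y -> P \subset block m x -> Q \subset block m y ->
        powR (m%:R : R) (2 / 3) <= #|P|%:R ->
        powR (m%:R : R) (2 / 3) <= #|Q|%:R ->
        (e_between (Rg m d) P Q)%:R
          <= (1 + eps) * (2 ^+ delta x y / 2 ^+ d) * #|P|%:R * #|Q|%:R).

(* Main.v *)
Require Import Defs.
From HB Require Import structures.
From mathcomp Require Import all_boot all_order all_algebra.
From mathcomp Require Import reals exp.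
Import Order.TTheory GRing.Theory Num.Theory.
Local Open Scope ring_scope.

From mathcomp Require Import lra.

Lemma delta_sym d (x y : cube d) : delta x y = delta y x.
Proof. by rewrite /delta; congr _.+1; apply: eq_find => i; rewrite eq_sym. Qed.

Lemma level_uniq d m l l' (e : {set vtx d m}) :
  is_level l e -> is_level l' e -> l = l'.
Proof.
case/existsP=> u /existsP [v /and3P [/eqP -> uv /eqP <-]].
case/existsP=> u' /existsP [v' /and3P [/eqP E uv' /eqP <-]].
have hu : u' \in [set u; v] by rewrite E !inE eqxx.
have hv : v' \in [set u; v] by rewrite E !inE eqxx orbT.
move: hu hv uv'; rewrite !inE => /orP [] /eqP -> /orP [] /eqP ->;
  rewrite ?eqxx // => _; exact: delta_sym.
Qed.

Lemma sum_ind_le1 (P : nat -> bool) (s : seq nat) :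
  uniq s -> (forall l l', P l -> P l' -> l = l') ->
  (\sum_(l <- s) (P l : nat) <= 1)%N.
Proof.
move=> us HP.
case: (boolP (has P s)) => [/hasP [l0 l0s Pl0]|/hasPn hn].
  rewrite (bigD1_seq l0) //= big1_seq ?Pl0 // => l /andP [nl _].
  by case: (boolP (P l)) => // /(HP _ _ Pl0) el; rewrite el eqxx in nl.
by rewrite big1_seq // => l /andP [_ /hn] /negbTE ->.
Qed.

Lemma card_sum (T : finType) (X : {set T}) (P : pred T) :
  #|[set e in X | P e]| = \sum_(e in X) (P e : nat).
Proof.
rewrite -sum1_card big_mkcond [RHS]big_mkcond /=.
by apply: eq_bigr => e _; rewrite !inE; case: (e \in X); case: (P e).
Qed.

Lemma e_level_split d m l (A B : {set {set vtx d m}}) :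
  A \subset B -> e_level l B = (e_level l A + e_level l (B :\: A))%N.
Proof.
move=> sAB; rewrite /e_level -(cardsID A [set e in B | is_level l e]); congr (_ + _)%N.
  apply: eq_card => e; rewrite !inE; case eA: (e \in A); rewrite ?andbF ?andbT //.
  by rewrite (subsetP sAB _ eA).
by apply: eq_card => e; rewrite !inE; case: (e \in A).
Qed.

Lemma sum_levels_le d m (X : {set {set vtx d m}}) :
  (\sum_(1 <= l < d.+1) e_level l X <= #|X|)%N.
Proof.
rewrite /e_level.
under eq_bigr => l _ do rewrite card_sum.
rewrite exchange_big /= -sum1_card; apply: leq_sum => e _.
apply: sum_ind_le1; first exact: iota_uniq.
by move=> l l'; apply: level_uniq.
Qed.

Lemma key d m (G B : {set {set vtx d m}}) : G \subset B ->
  (\sum_(1 <= l < d.+1) e_level l B <= \sum_(1 <= l < d.+1) e_level l G + (#|B| - #|G|))%N.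
Proof.
move=> sGB.
under eq_bigr => l _ do rewrite (@e_level_split d m l G B sGB).
rewrite big_split /= leq_add2l.
have := @sum_levels_le d m (B :\: G).
by rewrite cardsD (setIidPr sGB).
Qed.

Local Open Scope ring_scope.
Theorem proposition2p5 (R : realType)
    (Rg : forall m d : nat, {set {set vtx d m}}) :
  random_like_family R Rg ->
  forall (d : nat) (eps : R), (0 < d)%N -> 0 < eps ->
  exists M : nat, forall m : nat, (M <= m)%N ->
  forall alpha : R, 0 <= alpha <= 1 ->
  forall G : {set {set vtx d m}}, G \subset Rg m d ->
    (alpha + 2 * eps) * (nedges (Rg m d))%:R <= (nedges G)%:R ->
    alpha + eps <=
      d%:R^-1 * \sum_(1 <= l < d.+1)
                  (e_level l G)%:R / (2 ^+ d.-1 * (m%:R) ^+ 2).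
Proof.
move=> [_ H] d eps d0 e0.
pose dl := eps / (3 + 2 * eps).
have h3 : 0 < 3 + 2 * eps by lra.
have dl0 : 0 < dl by rewrite divr_gt0.
have dle : dl * (3 + 2 * eps) = eps by rewrite /dl mulfVK // gt_eqF.
have [M HM] := H d dl dl0.
exists (maxn M 1) => m; rewrite geq_max => /andP [Mm m1] alpha /andP [a0 a1] G sG HG.
have [[Hl [HN1 HN2]] _] := HM m Mm.
pose c : R := 2 ^+ d.-1 * m%:R ^+ 2.
have c0 : 0 < c.
  rewrite /c mulr_gt0 //; first exact: exprn_gt0.
  by rewrite exprn_gt0 // ltr0n.
have d0' : (0 : R) < d%:R by rewrite ltr0n.
have hk := @key d m G (Rg m d) sG.
have nGN : (nedges G <= nedges (Rg m d))%N by exact: subset_leq_card.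
have hk' : (\sum_(1 <= l < d.+1) (e_level l (Rg m d))%:R : R) <=
   (\sum_(1 <= l < d.+1) (e_level l G)%:R) + (nedges (Rg m d))%:R - (nedges G)%:R.
  by rewrite -!natr_sum -addrA -natrB // -natrD ler_nat.
have hR : ((1 - dl) * (d%:R * c) : R) <= \sum_(1 <= l < d.+1) (e_level l (Rg m d))%:R.
  rewrite mulrCA mulr_natl.
  have -> : ((1 - dl) * c) *+ d = \sum_(1 <= l < d.+1) ((1 - dl) * c).
    by rewrite sumr_const_nat subn1.
  apply: ler_sum_nat => i hi.
  by case: (Hl i hi).
rewrite -mulr_suml mulrCA -invfM ler_pdivlMr; last exact: mulr_gt0.
have Tc : d%:R * 2 ^+ d.-1 * m%:R ^+ 2 = d%:R * c :> R by rewrite /c mulrA.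
rewrite Tc in HN1 HN2.
move: hk' hR HN1 HN2 HG.
set SR := \sum_(_ <= _ < _) _; set SG := \sum_(_ <= _ < _) _.
set N := (nedges _)%:R; set nG := (nedges _)%:R.
move=> h1 h2 h3' h4 h5.
have p1 : 0 <= (alpha + 2 * eps) * (N - (1 - dl) * (d%:R * c)).
  by apply: mulr_ge0; lra.
have p2 : 0 <= (d%:R * c) * (dl * (1 - alpha)).
  by apply: mulr_ge0; apply: mulr_ge0; lra.
change ((alpha + eps) * (d%:R * c) <= SG).
have q : (d%:R * c) * eps = (d%:R * c) * (dl * (3 + 2 * eps)) by rewrite dle.
move: p1 p2 q h1 h2 h3' h4 h5; generalize (d%:R * c) => T.
move=> *; nra.
Qed.
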